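(* Let $L,U\in\mathbb{P}_d$ with $L\prec U$ and let $S\in\mathbb{H}_d$ be arbitrary. Write $U-L=P^*P$ and take an eigendecomposition $PSP^*=Q\Lambda Q^*$ with $Q$ unitary and $\Lambda$ real diagonal. Then a solution of $$\max_{L\preceq Z\preceq U}\ \operatorname{tr}(SZ)$$ is given by $Z=L+P^*Q[\operatorname{sgn}(\Lambda)]_+Q^*P$.
   Context: $\mathbb{H}_d$ denotes the $d\times d$ Hermitian matrices and $\mathbb{P}_d$ the $d\times d$ Hermitian positive definite matrices; $\preceq$ ($\prec$) is the Löwner order ($A\preceq B$ iff $B-A$ is positive semidefinite, $A\prec B$ iff $B-A$ is positive definite). For real diagonal $\Lambda$, $[\operatorname{sgn}(\Lambda)]_+$ is the diagonal matrix with $i$-th diagonal entry $1$ if $\lambda_{ii}>0$ and $0$ otherwise. *)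

(* Defs.v *)
(* Complex scalars: an arbitrary numClosedFieldType C
   (e.g. algC, or complex R for R : rcfType); conjugation is Num.conj. *)
From HB Require Import structures.
From mathcomp Require Import all_boot all_order all_algebra.
Set Implicit Arguments. Unset Strict Implicit. Unset Printing Implicit Defensive.
Import Order.TTheory GRing.Theory Num.Theory.
Local Open Scope ring_scope.
Local Open Scope sesquilinear_scope.

Section Loewner.
Variables (C : numClosedFieldType) (d : nat).

Definition psdmx (A : 'M[C]_d) : Prop :=
  A \is hermsymmx /\ forall v : 'rV[C]_d, 0 <= (v *m A *m v ^t*) 0 0.

Definition pdmx (A : 'M[C]_d) : Prop :=
  A \is hermsymmx /\ forall v : 'rV[C]_d, v != 0 -> 0 < (v *m A *m v ^t*) 0 0.

Definition loewner_le (A B : 'M[C]_d) : Prop := psdmx (B - A).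
Definition loewner_lt (A B : 'M[C]_d) : Prop := pdmx (B - A).

(* diagonal of [sgn(Lambda)]_+ : 1 where lambda_ii > 0, 0 otherwise *)
Definition pos_sgn (lam : 'rV[C]_d) : 'rV[C]_d :=
  \row_i (if 0 < lam 0 i then 1 else 0).

End Loewner.

(* Main.v *)
Require Import Defs.
From HB Require Import structures.
From mathcomp Require Import all_boot all_order all_algebra.
Import Order.TTheory GRing.Theory Num.Theory.
Local Open Scope ring_scope.
Local Open Scope sesquilinear_scope.

Section Helpers.
Variable C : numClosedFieldType.

Lemma ctmxM m n p (A : 'M[C]_(m, n)) (B : 'M[C]_(n, p)) :
  (A *m B) ^t* = B ^t* *m A ^t*.
Proof. by rewrite trmx_mul map_mxM. Qed.

Lemma ctmxD m n (A B : 'M[C]_(m, n)) : (A + B) ^t* = A ^t* + B ^t*.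
Proof. by apply/matrixP => i j; rewrite !mxE rmorphD. Qed.

Lemma ctmxN m n (A : 'M[C]_(m, n)) : (- A) ^t* = - A ^t*.
Proof. by apply/matrixP => i j; rewrite !mxE rmorphN. Qed.

Lemma ctmx1 n : (1%:M : 'M[C]_n) ^t* = 1%:M.
Proof. by apply/matrixP => i j; rewrite !mxE conjC_nat eq_sym. Qed.

Lemma hermE n (A : 'M[C]_n) : (A \is hermsymmx) = (A == A ^t*).
Proof. by rewrite is_hermitianmxE expr0 scale1r. Qed.

Lemma psd_congr n (A B : 'M[C]_n) : psdmx A -> psdmx (B ^t* *m A *m B).
Proof.
case; rewrite hermE => /eqP hA pA; split.
  rewrite hermE !ctmxM trmxCK -hA; apply/eqP; by rewrite mulmxA.
move=> v; have := pA (v *m B ^t*).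
by rewrite ctmxM trmxCK !mulmxA.
Qed.

Lemma psd_diag n (e : 'rV[C]_n) : (forall i, 0 <= e 0 i) -> psdmx (diag_mx e).
Proof.
move=> he; split.
  rewrite hermE; apply/eqP/matrixP => i j; rewrite !mxE eq_sym.
  case: eqP => [->|_]; last by rewrite mulr0n rmorph0.
  by rewrite !mulr1n; apply/esym/CrealP; apply: ger0_real.
move=> v; rewrite mul_mx_diag !mxE; apply: sumr_ge0 => i _.
rewrite !mxE mulrAC; apply: mulr_ge0 => //; exact: mul_conjC_ge0.
Qed.

Lemma psd_diag_ge0 n (A : 'M[C]_n) i : psdmx A -> 0 <= A i i.
Proof.
case=> _ /(_ (delta_mx 0 i)).
have -> : (delta_mx 0 i : 'rV[C]_n) ^t* = delta_mx i 0.
  by apply/matrixP => a b; rewrite !mxE andbC conjC_nat.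
by rewrite -rowE -colE !mxE.
Qed.

End Helpers.
Arguments psd_congr {C n A} B _.
Arguments psd_diag_ge0 {C n A} i _.


Lemma tr_conj (C : numClosedFieldType) (d : nat) (S P Q R : 'M[C]_d) (lam : 'rV[C]_d) :
  Q^t* *m Q = 1%:M ->
  P *m S *m P ^t* = Q *m diag_mx lam *m Q ^t* ->
  \tr (S *m (P^t* *m R *m P)) = \tr (diag_mx lam *m (Q^t* *m R *m Q)).
Proof.
move=> QtQ hPS.
rewrite !mulmxA mxtrace_mulC !mulmxA hPS.
by rewrite -!mulmxA mxtrace_mulC !mulmxA.
Qed.

Theorem theorem7 (C : numClosedFieldType) (d : nat)
    (L U S P Q : 'M[C]_d) (lam : 'rV[C]_d) :
  pdmx L -> pdmx U -> loewner_lt L U ->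
  S \is hermsymmx ->
  U - L = P ^t* *m P ->
  Q \is unitarymx ->
  (forall i, lam 0 i \is Num.real) ->
  P *m S *m P ^t* = Q *m diag_mx lam *m Q ^t* ->
  let Z := L + P ^t* *m Q *m diag_mx (pos_sgn lam) *m Q ^t* *m P in
  loewner_le L Z /\ loewner_le Z U /\
  (forall W : 'M[C]_d, loewner_le L W -> loewner_le W U ->
     \tr (S *m W) <= \tr (S *m Z)).
Proof.
move=> pL pU [_ pUL] hS hUL uQ rlam hPS Z.
set D := diag_mx (pos_sgn lam).
have QQ : Q *m Q^t* = 1%:M by apply/unitarymxP.
have QtQ : Q^t* *m Q = 1%:M by apply: mulmx1C.
have D01 : forall i, 0 <= pos_sgn lam 0 i /\ 0 <= 1 - pos_sgn lam 0 i.
  by move=> i; rewrite mxE; case: ifP; rewrite ?subrr ?subr0 ?ler01 ?lexx.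
set E := \row_i (1 - pos_sgn lam 0 i).
have DE : diag_mx E = 1%:M - D.
  apply/matrixP=> i j; rewrite !mxE; case: eqP => _ //=.
  by rewrite subr0.
have ZL : Z - L = (Q^t* *m P)^t* *m D *m (Q^t* *m P).
  by rewrite /Z [L + _]addrC addrK ctmxM trmxCK !mulmxA.
have UZ : U - Z = (Q^t* *m P)^t* *m diag_mx E *m (Q^t* *m P).
  rewrite /Z opprD addrA hUL DE ctmxM trmxCK mulmxBr mulmxBl mulmx1.
  by rewrite [P^t* *m Q *m (_ *m _)]mulmxA -[P^t* *m Q *m Q^t*]mulmxA QQ mulmx1 !mulmxA.
split; first by rewrite /loewner_le ZL; apply: psd_congr; apply: psd_diag => i; case: (D01 i).
split; first by rewrite /loewner_le UZ; apply: psd_congr; apply: psd_diag => i; rewrite mxE; case: (D01 i).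
move=> W hLW hWU.
have Pu : P \in unitmx.
  rewrite unitmxE unitfE; apply/negP => /eqP hdet.
  have : \det (P^t*) == 0 by rewrite det_map_mx det_tr hdet rmorph0.
  case/det0P => v vn0 vP; have := pUL v vn0.
  by rewrite hUL mulmxA vP !mul0mx mxE ltxx.
set M := invmx P.
have MP : M *m P = 1%:M by apply: mulVmx.
have PM : P *m M = 1%:M by apply: mulmxV.
set B := M *m Q.
set X := W - L.
have PB : P *m B = Q by rewrite mulmxA PM mul1mx.
set T := B^t* *m X *m B.
have T0 : forall i, 0 <= T i i by move=> i; have := psd_diag_ge0 i (psd_congr B hLW).
have T1 : forall i, 0 <= 1 - T i i.
  move=> i; have := psd_diag_ge0 i (psd_congr B hWU).
  have -> : U - W = P^t* *m P - X by rewrite -hUL /X opprB addrA subrK.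
  rewrite mulmxBr mulmxBl -/T.
  have -> : B^t* *m (P^t* *m P) *m B = 1%:M.
    by rewrite mulmxA -ctmxM -mulmxA PB QtQ.
  by rewrite !mxE eqxx mulr1n.
have eX : X = P^t* *m (M^t* *m X *m M) *m P.
  by rewrite !mulmxA -ctmxM MP ctmx1 mul1mx -mulmxA MP mulmx1.
have e1 : \tr (S *m (Z - L)) = \tr (diag_mx lam *m D).
  have -> : Z - L = P^t* *m (Q *m D *m Q^t*) *m P by rewrite ZL ctmxM trmxCK !mulmxA.
  rewrite (@tr_conj _ _ _ _ _ _ _ QtQ hPS).
  by rewrite -!mulmxA QtQ mulmx1 [Q^t* *m (Q *m D)]mulmxA QtQ mul1mx.
have e2 : \tr (S *m X) = \tr (diag_mx lam *m T).
  rewrite {1}eX (@tr_conj _ _ _ _ _ _ _ QtQ hPS) /T /B ctmxM !mulmxA.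
  done.
rewrite -subr_ge0.
have -> : \tr (S *m Z) - \tr (S *m W) = \tr (S *m (Z - L)) - \tr (S *m X).
  by rewrite /X !mulmxBr !linearB /= opprB addrA subrK.
rewrite e1 e2 -linearB /= -mulmxBr mul_diag_mx /mxtrace.
clearbody T; apply: sumr_ge0 => i _; rewrite !mxE eqxx mulr1n.
move: (T0 i) (T1 i); case: ifP => hl hT0 hT1.
  by rewrite mulr_ge0 // ltW.
rewrite sub0r mulr_le0 // ?oppr_le0 //.
by rewrite real_leNgt ?hl ?real0.
Qed.
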